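(* Let $\Sigma$ be a finite nonempty set and let $\{(A_i,B_i)\in\mathbb{R}^{n\times n}\times\mathbb{R}^{n\times m} : i\in\Sigma\}$ be given. The switched control system $x(k+1)=A_{\sigma(k)}x(k)+B_{\sigma(k)}u(k)$ is mode-independent feedback stabilizable (IFS) if and only if it is current-mode-independent memory-feedback stabilizable (IFS$_m$).
   Context: Let $\Sigma$ be a finite nonempty set (alphabet) and $\{(A_i,B_i)\in\mathbb{R}^{n\times n}\times\mathbb{R}^{n\times m} : i\in\Sigma\}$. Consider the discrete-time switched control system $x(k+1)=A_{\sigma(k)}x(k)+B_{\sigma(k)}u(k)$, $k\in\mathbb{N}=\{0,1,2,\dots\}$, where the switching signal $\sigma:\mathbb{N}\to\Sigma$ is arbitrary (the set of all such signals is denoted $\Sigma^\omega$) and $u(k)\in\mathbb{R}^m$ is the control. $\|\cdot\|$ is the Euclidean norm. Let $\mathcal{H}$ be the set of all tuples $(x_k,\dots,x_0;\,i_k,\dots,i_0)$ with $k\in\mathbb{N}$, $x_j\in\mathbb{R}^n$, $i_j\in\Sigma$ (state string and mode string of equal length $k+1$), and let $\mathcal{H}_-$ be the set of all tuples $(x_k,\dots,x_0;\,i_{k-1},\dots,i_0)$ with $k\in\mathbb{N}$ (mode string one shorter than the state string; empty when $k=0$). Controllers are arbitrary functions (no regularity assumed) of the following kinds, each determining, for every $x_0\in\mathbb{R}^n$ and $\sigma\in\Sigma^\omega$, a unique closed-loop trajectory with $x(0)=x_0$: (1) static mode-independent $\Phi:\mathbb{R}^n\to\mathbb{R}^m$,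 with $u(k)=\Phi(x(k))$; (1)$^d$ static mode-dependent $\Phi_d:\Sigma\times\mathbb{R}^n\to\mathbb{R}^m$, with $u(k)=\Phi_d(\sigma(k),x(k))$; (2) current-mode-independent with memory $\Psi:\mathcal{H}_-\to\mathbb{R}^m$, with $u(k)=\Psi(x(k),\dots,x(0);\,\sigma(k-1),\dots,\sigma(0))$; (2)$^d$ current-mode-dependent with memory $\Psi_d:\mathcal{H}\to\mathbb{R}^m$, with $u(k)=\Psi_d(x(k),\dots,x(0);\,\sigma(k),\dots,\sigma(0))$. The closed loop is uniformly exponentially stable (UES) if there exist $M>0$ and $\gamma\in[0,1)$ such that $\|x(k)\|\le M\gamma^k\|x_0\|$ for all $x_0\in\mathbb{R}^n$, all $\sigma\in\Sigma^\omega$ and all $k\in\mathbb{N}$. The system is called IFS, DFS, IFS$_m$, DFS$_m$ if there exists a controller of kind (1), (1)$^d$, (2), (2)$^d$ respectively such that the closed loop is UES. *)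

(* Defs.v *)
From HB Require Import structures.
From mathcomp Require Import all_boot all_order all_algebra.
From mathcomp Require Import reals.
Set Implicit Arguments. Unset Strict Implicit. Unset Printing Implicit Defensive.
Import Order.TTheory GRing.Theory Num.Theory.
Local Open Scope ring_scope.

Section SwitchedSystems.
Variables (R : realType) (Sigma : finType) (n m : nat).
Variables (A : Sigma -> 'M[R]_n) (B : Sigma -> 'M[R]_(n, m)).

Definition eucl_norm (x : 'cV[R]_n) : R := Num.sqrt (\sum_(i < n) x i 0 ^+ 2).

Definition modes_upto (sigma : nat -> Sigma) (k : nat) : seq Sigma :=
  rev (mkseq sigma k).

Fixpoint traj_static (Phi : 'cV[R]_n -> 'cV[R]_m) (x0 : 'cV[R]_n)
    (sigma : nat -> Sigma) (k : nat) : 'cV[R]_n :=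
  match k with
  | 0 => x0
  | k'.+1 => let x := traj_static Phi x0 sigma k' in
             A (sigma k') *m x + B (sigma k') *m Phi x
  end.

(* (2) current-mode-independent with memory:
   u(k) = Psi (x(k), ..., x(0); sigma(k-1), ..., sigma(0)).
   Histories are stored as seqs [:: x(k); ...; x(0)]. *)
Fixpoint hist_mem (Psi : seq 'cV[R]_n -> seq Sigma -> 'cV[R]_m)
    (x0 : 'cV[R]_n) (sigma : nat -> Sigma) (k : nat) : seq 'cV[R]_n :=
  match k with
  | 0 => [:: x0]
  | k'.+1 => let h := hist_mem Psi x0 sigma k' in
             let x := head x0 h in
             (A (sigma k') *m x + B (sigma k') *m Psi h (modes_upto sigma k')) :: h
  end.

Definition traj_mem Psi x0 sigma k : 'cV[R]_n := head x0 (hist_mem Psi x0 sigma k).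

Definition UES (traj : 'cV[R]_n -> (nat -> Sigma) -> nat -> 'cV[R]_n) : Prop :=
  exists M : R, exists gamma : R, 0 < M /\ 0 <= gamma < 1 /\
    forall (x0 : 'cV[R]_n) (sigma : nat -> Sigma) (k : nat),
      eucl_norm (traj x0 sigma k) <= M * gamma ^+ k * eucl_norm x0.

Definition IFS : Prop := exists Phi : 'cV[R]_n -> 'cV[R]_m, UES (traj_static Phi).

Definition IFS_m : Prop :=
  exists Psi : seq 'cV[R]_n -> seq Sigma -> 'cV[R]_m, UES (traj_mem Psi).

End SwitchedSystems.

(* Main.v *)
Require Import Defs.
From mathcomp Require Import all_boot all_order all_algebra.
From mathcomp Require Import reals.
From mathcomp Require Import boolp classical_sets.
Set Implicit Arguments. Unset Strict Implicit. Unset Printing Implicit Defensive.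
Import Order.TTheory GRing.Theory Num.Theory.
Local Open Scope ring_scope.

Section Proof.
Variables (R : realType) (Sigma : finType) (n m : nat).
Variables (A : Sigma -> 'M[R]_n) (B : Sigma -> 'M[R]_(n, m)).

Lemma hist_cons Psi x0 (s : nat -> Sigma) k :
  exists y t, hist_mem A B Psi x0 s k = y :: t.
Proof. by case: k => [|k] /=; eauto. Qed.

Lemma head_hist Psi x0 x1 (s : nat -> Sigma) k t :
  head x1 (hist_mem A B Psi x0 s k ++ t) = traj_mem A B Psi x0 s k.
Proof. by rewrite /traj_mem; have [y [t' ->]] := hist_cons Psi x0 s k. Qed.

Definition scons (i : Sigma) (s : nat -> Sigma) : nat -> Sigma :=
  fun t => if t is t'.+1 then s t' else i.

Lemma modes_scons i s k :
  modes_upto (scons i s) k.+1 = modes_upto s k ++ [:: i].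
Proof.
rewrite /modes_upto /mkseq /= rev_cons cats1; congr (rcons (rev _) _).
by rewrite -[1%N]/(1 + 0)%N iotaDl -map_comp.
Qed.

Lemma shift_hist Psi x i (s : nat -> Sigma) k :
  let x1 := A i *m x + B i *m Psi [:: x] [::] in
  let Psi' := fun h w => Psi (h ++ [:: x]) (w ++ [:: i]) in
  hist_mem A B Psi' x1 s k ++ [:: x] = hist_mem A B Psi x (scons i s) k.+1.
Proof.
move=> x1 Psi'; elim: k => [|k IH] //.
change (hist_mem A B Psi' x1 s k.+1 ++ [:: x] = (let h := hist_mem A B Psi x (scons i s) k.+1 in (A (scons i s k.+1) *m head x h + B (scons i s k.+1) *m Psi h (modes_upto (scons i s) k.+1)) :: h)).
rewrite -IH /= modes_scons /Psi'.
by have [y [t ->]] := hist_cons Psi' x1 s k.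
Qed.

Lemma shift_traj Psi x i (s : nat -> Sigma) k :
  traj_mem A B (fun h w => Psi (h ++ [:: x]) (w ++ [:: i]))
     (A i *m x + B i *m Psi [:: x] [::]) s k =
  traj_mem A B Psi x (scons i s) k.+1.
Proof.
by rewrite {2}/traj_mem -shift_hist head_hist.
Qed.

Lemma eucl_norm_ge0 (x : 'cV[R]_n) : 0 <= eucl_norm x.
Proof. exact: sqrtr_ge0. Qed.

Lemma eucl_norm0 : eucl_norm (0 : 'cV[R]_n) = 0.
Proof.
rewrite /eucl_norm big1 ?sqrtr0 // => i _; by rewrite mxE expr0n.
Qed.

Lemma eucl_norm_eq0 (x : 'cV[R]_n) : eucl_norm x <= 0 -> x = 0.
Proof.
move=> h; have h0 : eucl_norm x = 0 by apply/eqP; rewrite eq_le h eucl_norm_ge0.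
move: h0; rewrite /eucl_norm => /eqP; rewrite sqrtr_eq0 => hs.
have hs' : \sum_(i < n) x i 0 ^+ 2 = 0.
  by apply/eqP; rewrite eq_le hs sumr_ge0 // => i _; rewrite sqr_ge0.
apply/matrixP => i j; rewrite ord1 mxE.
have /psumr_eq0P := hs' => /(_ (fun i _ => sqr_ge0 _)) /(_ i isT) /eqP.
by rewrite sqrf_eq0 => /eqP.
Qed.

Variable s0 : Sigma.
Variable gamma : R.
Hypothesis g0 : 0 <= gamma.
Hypothesis g1 : gamma < 1.

Definition good (x : 'cV[R]_n) (b : R) : Prop :=
  exists Psi, forall s k, eucl_norm (traj_mem A B Psi x s k) <= b * gamma ^+ k.

Definition V x : R := inf (good x).

Lemma good_ge x b : good x b -> eucl_norm x <= b.
Proof. by case=> Psi /(_ (fun _ => s0) 0%N); rewrite expr0 mulr1. Qed.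

Lemma good_lb x : has_lbound (good x).
Proof. exists 0 => b /good_ge; apply: le_trans; exact: eucl_norm_ge0. Qed.

Lemma V_le x b : good x b -> V x <= b.
Proof. by move=> gb; apply: (ge_inf (good_lb x)). Qed.

Lemma V_ge x : nonempty (good x) -> eucl_norm x <= V x.
Proof. by move=> ne; apply: lb_le_inf => // b /good_ge. Qed.

Lemma good_shift x b Psi i :
  (forall s k, eucl_norm (traj_mem A B Psi x s k) <= b * gamma ^+ k) ->
  good (A i *m x + B i *m Psi [:: x] [::]) (b * gamma).
Proof.
move=> h; exists (fun h w => Psi (h ++ [:: x]) (w ++ [:: i])) => s k; rewrite shift_traj.
by rewrite -mulrA -exprS; apply: h.
Qed.

Lemma good0 : good 0 0.
Proof.
exists (fun _ _ => 0) => s k; rewrite mul0r.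
suff -> : traj_mem A B (fun _ _ => 0) 0 s k = 0 by rewrite eucl_norm0.
elim: k => [|k IH] //=; rewrite /traj_mem /= -/(traj_mem _ _ _ _ _ _) IH.
by rewrite !mulmx0 addr0.
Qed.

Definition lam : R := 2 / (1 + gamma).
Definition cc : R := gamma * lam.

Lemma step x : nonempty (good x) ->
  exists u, forall i, nonempty (good (A i *m x + B i *m u)) /\
       V (A i *m x + B i *m u) <= cc * V x.
Proof.
move=> ne.
have Vge0 : 0 <= V x by apply: le_trans (V_ge ne); exact: eucl_norm_ge0.
have gp : 0 < 1 + gamma by rewrite ltr_pwDl.
case: (ltrP 0 (V x)) => Vp.
- have eps0 : 0 < (lam - 1) * V x.
    rewrite mulr_gt0 // subr_gt0 /lam ltr_pdivlMr // mul1r.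
    by rewrite -[2]/(1 + 1) ltrD2l.
  have [b gb bl] := inf_adherent eps0 (conj ne (good_lb x)).
  case: (gb) => Psi hP; exists (Psi [:: x] [::]) => i.
  have gs := good_shift i hP; split; first by exists (b * gamma).
  apply: le_trans (V_le gs) _.
  rewrite /cc -mulrA [b * gamma]mulrC ler_wpM2l //.
  have e : V x + (lam - 1) * V x = lam * V x by rewrite mulrBl mul1r addrCA subrr addr0.
  by rewrite -e; apply: ltW.
- have x0 : x = 0.
    by apply: eucl_norm_eq0; apply: le_trans (V_ge ne) Vp.
  have Vx0 : V x = 0 by apply/eqP; rewrite eq_le Vp Vge0.
  exists 0 => i; rewrite Vx0 x0 !mulmx0 addr0; split; first by exists 0; exact: good0.
  by rewrite mulr0; apply: V_le good0.
Qed.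

End Proof.

Theorem theorem1 (R : realType) (Sigma : finType) (n m : nat)
    (A : Sigma -> 'M[R]_n) (B : Sigma -> 'M[R]_(n, m)) :
  (0 < #|Sigma|)%N ->
  (IFS A B <-> IFS_m A B).
Proof.
move=> /card_gt0P [s0 _]; split.
- case=> Phi [M [g [M0 [/andP [g0 g1] H]]]].
  exists (fun h _ => Phi (head 0 h)); exists M, g; split => //; split; first by rewrite g0.
  move=> x0 s k.
  suff -> : traj_mem A B (fun h _ => Phi (head 0 h)) x0 s k = traj_static A B Phi x0 s k by [].
  elim: k => [|k IH] //.
  rewrite /= -IH /traj_mem /=.
  by have [y [t ->]] := hist_cons A B (fun h _ => Phi (head 0 h)) x0 s k.
- case=> Psi [M [g [M0 [/andP [g0 g1] H]]]].
  have ne : forall x, nonempty (good A B g x).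
    move=> x; exists (M * eucl_norm x), Psi => s k.
    by rewrite mulrAC; apply: H.
  have hst : forall x : 'cV[R]_n, exists u : 'cV[R]_m, forall i,
      nonempty (good A B g (A i *m x + B i *m u)) /\
      V A B g (A i *m x + B i *m u) <= cc g * V A B g x.
    move=> x; have hh := step s0 g0 g1 (ne x); exact hh.
  have [Phi HPhi] := choice hst.
  have gp : 0 < 1 + g by apply: (lt_le_trans ltr01); rewrite lerDl.
  have c0 : 0 <= cc g by rewrite /cc /lam; apply: mulr_ge0 => //; apply: divr_ge0 => //; exact: ltW.
  have c1 : cc g < 1.
    rewrite /cc /lam mulrA ltr_pdivrMr // mul1r mulrC.
    by rewrite -[2]/(1 + 1) mulrDl mul1r ltrD2r.
  exists Phi, M, (cc g); split => //; split; first by rewrite c0.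
  move=> x0 s k.
  have HV : V A B g (traj_static A B Phi x0 s k) <= cc g ^+ k * V A B g x0.
    elim: k => [|k IH]; first by rewrite expr0 mul1r.
    rewrite /=; apply: le_trans (proj2 (HPhi _ _)) _.
    by rewrite exprS -mulrA ler_wpM2l.
  apply: le_trans (V_ge s0 (ne _)) _; apply: le_trans HV _.
  rewrite [M * _]mulrC -mulrA ler_wpM2l ?exprn_ge0 //.
  by apply: (V_le s0); exists Psi => s' k'; rewrite mulrAC; apply: H.
Qed.
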